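(* The Recursive Measure satisfies the added-NO-blocker postulate. For every SVG $\mathcal{G}=(N,\mathcal{W})$ and all $i,j\in N$ with $j$ not a dummy in $\mathcal{G}$: $$\frac{RM'^-_i(\mathcal{G})}{RM'^-_j(\mathcal{G})}=\frac{RM'^-_i(\mathcal{G}^N)}{RM'^-_j(\mathcal{G}^N)}.$$
   Context: A simple voting game (SVG) is a pair $\mathcal{G}=(N,\mathcal{W})$ with $N$ a nonempty finite set of players and $\mathcal{W}\subseteq 2^N$ monotone, $\emptyset\notin\mathcal{W}$, $N\in\mathcal{W}$. Divisions are identified with their YES-sets. Decisiveness and success: - Player $k$ is YES-decisive in $S$ if $k\in S\in\mathcal{W}$ and $S\setminus\{k\}\notin\mathcal{W}$. - Player $k$ is NO-decisive in $S$ if $k\notin S\notin\mathcal{W}$ and $S\cup\{k\}\in\mathcal{W}$. - A dummy is never decisive. - Player $k$ is successful in $S$ if ($k\in S\in\mathcal{W}$) or ($k\notin S\notin\mathcal{W}$). Loyal children: if $S\in\mathcal{W}$, they are the sets $S\setminus\{m\}\in\mathcal{W}$ with $m\in S$. If $S\notin\mathcal{W}$, they are the sets $S\cup\{m\}\notin\mathcal{W}$ with $m\notin S$. Recursive efficacy score $\alpha_k(S)$: - $\alpha_k(S)=1$ if $k$ is decisive; - $\alpha_k(S)=0$ if $k$ is not successful; - otherwise, the average of $\alpha_k$ over the loyal children. For a game with $m$ players, the a priori RM NO-power is $RM'^-_k=2^{-m}\sum_{S\not\ni k}\alpha_k(S)$. For a new player $0\notin N$, the added-NO-blocker game is $\mathcal{G}^N=(N\cup\{0\},\{S\cup\{0\}:S\subseteq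 N\}\cup\mathcal{W})$. *)

(* Defs.v *)
From mathcomp Require Import all_boot all_order all_algebra.
Set Implicit Arguments. Unset Strict Implicit. Unset Printing Implicit Defensive.
Import Order.TTheory GRing.Theory Num.Theory.
Local Open Scope ring_scope.

(* A simple voting game on a finite player type T is given by its
   characteristic predicate W of winning coalitions (YES-sets). *)
Definition monotone_game (T : finType) (W : {set T} -> bool) : Prop :=
  forall S U : {set T}, S \subset U -> W S -> W U.

Definition is_SVG (T : finType) (W : {set T} -> bool) : Prop :=
  [/\ monotone_game W, ~~ W set0 & W setT].

Section Decisive.
Variables (T : finType) (W : {set T} -> bool).

Definition yes_decisive (k : T) (S : {set T}) : bool :=
  [&& k \in S, W S & ~~ W (S :\ k)].
Definition no_decisive (k : T) (S : {set T}) : bool :=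
  [&& k \notin S, ~~ W S & W (S :|: [set k])].
Definition decisive (k : T) (S : {set T}) : bool :=
  yes_decisive k S || no_decisive k S.
Definition successful (k : T) (S : {set T}) : bool :=
  ((k \in S) && W S) || ((k \notin S) && ~~ W S).

Definition dummy (k : T) : Prop :=
  forall S : {set T}, W (S :|: [set k]) = W (S :\ k).

(* loyal children of S, indexed by the player m that changes vote *)
Definition loyal_idx (S : {set T}) : {set T} :=
  if W S then [set m in S | W (S :\ m)]
  else [set m in ~: S | ~~ W (S :|: [set m])].

Definition loyal_child (S : {set T}) (m : T) : {set T} :=
  if W S then S :\ m else S :|: [set m].

(* Recursive efficacy score, computed with fuel; fuel #|T|.+1 suffices
   since each recursive step strictly decreases #|S| (winning S) or
   #|~: S| (losing S), and the recursion stops at a decisive k. *)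
Fixpoint alpha_fuel (n : nat) (k : T) (S : {set T}) : rat :=
  match n with
  | 0 => 0
  | n'.+1 =>
    if decisive k S then 1
    else if ~~ successful k S then 0
    else (\sum_(m in loyal_idx S) alpha_fuel n' k (loyal_child S m))
           / (#|loyal_idx S|)%:R
  end.

Definition alpha (k : T) (S : {set T}) : rat := alpha_fuel #|T|.+1 k S.

Definition RMneg (k : T) : rat :=
  (\sum_(S : {set T} | k \notin S) alpha k S) / (2 ^ #|T|)%:R.

End Decisive.

(* the added-NO-blocker game on players option T, new player None *)
Definition added_no_blocker (T : finType) (W : {set T} -> bool)
  : {set option T} -> bool :=
  fun S => (None \in S) || W [set x : T | Some x \in S].

(* Main.v *)
Require Import Defs.
From mathcomp Require Import all_boot all_order all_algebra.
Import Order.TTheory GRing.Theory Num.Theory.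
Local Open Scope ring_scope.

Lemma win0 (T : finType) (W : {set T} -> bool) (k : T) n (S : {set T}) :
 W S -> k \notin S -> alpha_fuel W n.+1 k S = 0.
Proof.
move=> WS kS /=.
by rewrite /decisive /yes_decisive /no_decisive /successful WS (negbTE kS).
Qed.

Lemma half_ratio (a b : rat) : a / 2 / (b / 2) = a / b.
Proof.
rewrite invfM invrK -!mulrA; congr (_ * _).
by rewrite mulrCA mulVf ?mulr1.
Qed.

Section Aux.
Variables (T : finType) (W : {set T} -> bool) (k : T).

Lemma stab n : forall m (S : {set T}), ~~ W S -> (#|~: S| < n)%N -> (#|~: S| < m)%N ->
  alpha_fuel W n k S = alpha_fuel W m k S.
Proof.
elim: n => [|n IH] [|m] S WS //.
move=> Hn Hm /=.
case: (decisive W k S) => //; case: (successful W k S) => //=.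
congr (_ / _); apply: eq_bigr => x.
rewrite /loyal_idx /loyal_child (negbTE WS) inE => /andP [xS Wx].
have Hc : (#|~: (S :|: [set x])| < #|~: S|)%N.
  rewrite setCU -setDE [X in (_ < X)%N](cardsD1 x) xS; exact: ltnSn.
apply: IH => //; apply: leq_trans Hc _; rewrite -ltnS //.
Qed.


Let G := added_no_blocker W.

Lemma liftW (S : {set T}) : G (Some @: S) = W S.
Proof.
rewrite /G /added_no_blocker.
have -> : (None \in Some @: S) = false by apply/imsetP => -[].
congr W; apply/setP => x; rewrite inE mem_imset //; exact: Some_inj.
Qed.

Lemma liftU (S : {set T}) x : Some @: S :|: [set Some x] = Some @: (S :|: [set x]).
Proof. by rewrite imsetU imset_set1. Qed.

Lemma liftB n : forall S : {set T}, ~~ W S ->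
  alpha_fuel G n (Some k) (Some @: S) = alpha_fuel W n k S.
Proof.
elim: n => [|n IH] S WS //=.
have inj : injective (@Some T) by exact: Some_inj.
rewrite /decisive /yes_decisive /no_decisive /successful liftW liftU liftW !mem_imset // (negbTE WS) /= !andbF /=.
case: ifP => // _; case: ifP => // _.
have Li : loyal_idx G (Some @: S) = Some @: loyal_idx W S.
  rewrite /loyal_idx liftW (negbTE WS); apply/setP => -[x|].
    by rewrite mem_imset // !inE liftU liftW mem_imset // !inE.
  rewrite !inE.
  have -> : G (Some @: S :|: [set None]) = true by rewrite /G /added_no_blocker !inE eqxx orbT.
  by rewrite andbF; apply/esym/imsetP => -[].
rewrite Li card_imset //; congr (_ / _).
rewrite big_imset /=; last by move=> a b _ _; exact: inj.
apply: eq_bigr => x; rewrite /loyal_idx /loyal_child (negbTE WS) liftW (negbTE WS) inE.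
move=> /andP [_ Wx]; rewrite liftU IH //.
Qed.

Definition hh (p : {set T} * bool) : {set option T} :=
  Some @: p.1 :|: (if p.2 then [set None] else set0).

Lemma hh_bij : bijective hh.
Proof.
have inj : injective (@Some T) by exact: Some_inj.
exists (fun S : {set option T} => ([set x | Some x \in S], None \in S)).
  move=> [S b]; rewrite /hh /=; case: b => /=.
    rewrite !inE eqxx orbT; congr pair; apply/setP => x.
    by rewrite !inE mem_imset // orbF.
  rewrite setU0; have -> : (None \in Some @: S) = false by apply/imsetP => -[].
  congr pair; apply/setP => x; by rewrite !inE mem_imset.
move=> S; rewrite /hh /=; apply/setP => -[x|]; rewrite !inE.
  rewrite mem_imset ?inE //; by case: ifP => _; rewrite ?inE ?orbF.
by case: ifP => HN; rewrite ?inE ?eqxx ?orbT ?orbF //; apply/imsetP => -[].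
Qed.

Lemma term (S : {set T}) : k \notin S ->
  alpha G (Some k) (hh (S, true)) + alpha G (Some k) (hh (S, false)) = alpha W k S.
Proof.
have inj : injective (@Some T) by exact: Some_inj.
move=> kS.
have -> : hh (S, true) = Some @: S :|: [set None] by [].
have -> : hh (S, false) = Some @: S by rewrite /hh /= setU0.
rewrite /alpha card_option.
rewrite [X in X + _]win0 //; last first.
  by rewrite !inE (mem_imset _ _ inj) orbF.
  by rewrite /G /added_no_blocker !inE eqxx orbT.
rewrite add0r.
case WS: (W S).
  rewrite win0 ?mem_imset // ?liftW //; by rewrite win0.
rewrite liftB ?WS //; apply: stab; rewrite ?WS //; apply: leq_ltn_trans (max_card _) _ => //.
Qed.

Lemma RMrel : RMneg G (Some k) = RMneg W k / 2.
Proof.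
rewrite /RMneg (reindex hh) /=; last exact: onW_bij hh_bij.
have -> : \sum_(j | Some k \notin hh j) alpha G (Some k) (hh j) =
   \sum_(S : {set T} | k \notin S) \sum_(b : bool) alpha G (Some k) (hh (S, b)).
  rewrite pair_big /=; apply: eq_bigl => -[S b] /=.
  by rewrite andbT /hh !inE mem_imset ?orbF; [case: b; rewrite ?inE // orbF|exact: Some_inj].
have -> : \sum_(S : {set T} | k \notin S) \sum_(b : bool) alpha G (Some k) (hh (S, b))
   = \sum_(S : {set T} | k \notin S) alpha W k S.
  by apply: eq_bigr => S kS; rewrite big_bool /= term.
by rewrite card_option expnS natrM invfM mulrA mulrAC.
Qed.

End Aux.

Theorem lemma4 (T : finType) (W : {set T} -> bool) (i j : T) :
  is_SVG W -> ~ dummy W j ->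
  RMneg W i / RMneg W j =
  RMneg (added_no_blocker W) (Some i) / RMneg (added_no_blocker W) (Some j).
Proof.
move=> _ _; rewrite !RMrel.
by rewrite half_ratio.
Qed.
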